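(* For every $\kappa>0$ there exists a constant $C_\kappa$ such that for all $r>0$ and all $\lambda\ge1$, $$\xi_\lambda(\kappa r)\le C_\kappa\,\xi_\lambda(r),\qquad \vartheta_\lambda(\kappa r)\le C_\kappa\,\vartheta_\lambda(r).$$
   Context: For $\lambda\ge1$ define $m_\lambda(t)=\lambda t^{-5/2}$ for $0<t\le1/2$, $m_\lambda(t)=\lambda\chi(t)$ for $1/2<t\le1$, $m_\lambda(t)=\lambda t^{-3/2}$ for $t>1$, where $\chi$ is a $C^1$ decreasing convex function on $[1/2,1]$ chosen so that $m_\lambda$ is a $C^1$ decreasing bijection of $(0,\infty)$ onto itself; and $\mu_\lambda(t)=\lambda t^{-5/2}$ for $0<t\le1/2$, $\mu_\lambda(t)=\lambda\tilde\chi(t)$ for $1/2<t\le1$, $\mu_\lambda(t)=\lambda t^{-1/2}$ for $t>1$, with $\tilde\chi$ a $C^1$ decreasing convex function chosen so that $\mu_\lambda$ is $C^1$ on $(0,\infty)$. Set $\xi_\lambda(r)=-m_\lambda'(m_\lambda^{-1}(r))$ and $\vartheta_\lambda(r)=-\mu_\lambda'(\mu_\lambda^{-1}(r))$ for $r>0$. *)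

(* Defs.v *)
From Stdlib Require Import Reals Lra ClassicalEpsilon.
From Coquelicot Require Import Coquelicot.
Open Scope R_scope.

Definition m_fun (chi : R -> R) (lam t : R) : R :=
  if Rle_dec t (1/2) then lam * Rpower t (-5/2)
  else if Rle_dec t 1 then lam * chi t
  else lam * Rpower t (-3/2).

Definition mu_fun (chit : R -> R) (lam t : R) : R :=
  if Rle_dec t (1/2) then lam * Rpower t (-5/2)
  else if Rle_dec t 1 then lam * chit t
  else lam * Rpower t (-1/2).

Definition convex_on_half_one (f : R -> R) : Prop :=
  forall x y a, 1/2 <= x <= 1 -> 1/2 <= y <= 1 -> 0 <= a <= 1 ->
    f (a * x + (1 - a) * y) <= a * f x + (1 - a) * f y.

Definition decreasing_on_half_one (f : R -> R) : Prop :=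
  forall x y, 1/2 <= x -> x <= y -> y <= 1 -> f y <= f x.

Definition C1_pos (f : R -> R) : Prop :=
  forall t, 0 < t -> ex_derive f t /\ continuous (Derive f) t.

Definition admissible_m (chi : R -> R) : Prop :=
  convex_on_half_one chi /\ decreasing_on_half_one chi /\
  forall lam, 1 <= lam ->
    C1_pos (m_fun chi lam) /\
    (forall t s, 0 < t -> t < s -> m_fun chi lam s < m_fun chi lam t) /\
    (forall t, 0 < t -> 0 < m_fun chi lam t) /\
    (forall r, 0 < r -> exists t, 0 < t /\ m_fun chi lam t = r).

Definition admissible_mu (chit : R -> R) : Prop :=
  convex_on_half_one chit /\ decreasing_on_half_one chit /\
  forall lam, 1 <= lam -> C1_pos (mu_fun chit lam).

(* inverse on (0,oo): some t > 0 with f t = r (unique when f is a bijection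
   of (0,oo) onto itself). *)
Definition pos_inv (f : R -> R) (r : R) : R :=
  epsilon (inhabits 0) (fun t => 0 < t /\ f t = r).

Definition xi (chi : R -> R) (lam r : R) : R :=
  - Derive (m_fun chi lam) (pos_inv (m_fun chi lam) r).

Definition vartheta (chit : R -> R) (lam r : R) : R :=
  - Derive (mu_fun chit lam) (pos_inv (mu_fun chit lam) r).

(* Main.v *)
Require Import Defs.
From Stdlib Require Import Reals Lra ClassicalEpsilon.
From Coquelicot Require Import Coquelicot.
Open Scope R_scope.

Lemma rp_pos x y : 0 < Rpower x y.
Proof. unfold Rpower; apply exp_pos. Qed.

Lemma rp_one c : Rpower 1 c = 1.
Proof. unfold Rpower; rewrite ln_1, Rmult_0_r; apply exp_0. Qed.

Lemma exp_le' a b : a <= b -> exp a <= exp b.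
Proof. intros [H|H]; [left; apply exp_increasing; exact H| subst; lra]. Qed.

Lemma rp_decr_base a b c : 0 < a -> a <= b -> c <= 0 -> Rpower b c <= Rpower a c.
Proof.
  intros Ha Hab Hc; unfold Rpower; apply exp_le'.
  assert (ln a <= ln b) by (apply ln_le; lra). nra.
Qed.

Lemma rp_exp_le1 y a b : 0 < y -> y <= 1 -> a <= b -> Rpower y b <= Rpower y a.
Proof.
  intros Hy Hy1 Hab; unfold Rpower; apply exp_le'.
  assert (ln y <= ln 1) by (apply ln_le; lra). rewrite ln_1 in H. nra.
Qed.

Lemma rp_half_bound c : c < 0 -> 1 < Rpower 2 (- / c) /\
  forall x, 0 < x -> x <= Rpower 2 (- / c) -> / 2 <= Rpower x c.
Proof.
  intros Hc. split.
  - rewrite <- (Rpower_O 2) at 1 by lra. apply Rpower_lt; try lra.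
    assert (/ c < 0) by (apply Rinv_lt_0_compat; lra). lra.
  - intros x Hx Hle. eapply Rle_trans; [| apply rp_decr_base; eauto; lra].
    rewrite Rpower_mult. replace (- / c * c) with (Ropp 1) by (field; lra).
    rewrite Rpower_Ropp, Rpower_1 by lra. lra.
Qed.

Lemma rp_deriv c t : 0 < t -> Derive (fun u => Rpower u c) t = c * Rpower t (c - 1).
Proof.
  intros Ht; apply is_derive_unique, is_derive_Reals, derivable_pt_lim_power; exact Ht.
Qed.

Lemma cont_bound_right (h : R -> R) a b M : a < b -> continuous h a ->
  (forall x, a < x < b -> h x <= M) -> h a <= M.
Proof.
  intros Hab Hc Hb. destruct (Rle_dec (h a) M) as [|Hn]; auto. exfalso.
  assert (He : 0 < h a - M) by lra.
  apply filterlim_locally with (eps := mkposreal _ He) in Hc.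
  destruct Hc as [d Hd].
  set (x := a + Rmin d (b - a) / 2).
  assert (Hd0 := cond_pos d).
  assert (Hm1 : Rmin d (b - a) <= d) by apply Rmin_l.
  assert (Hm2 : Rmin d (b - a) <= b - a) by apply Rmin_r.
  assert (Hm0 : 0 < Rmin d (b - a)) by (apply Rmin_glb_lt; lra).
  assert (Hx : ball a d x).
  { unfold ball; simpl; unfold AbsRing_ball, abs, minus, plus, opp; simpl.
    unfold x. rewrite Rabs_right; lra. }
  specialize (Hd x Hx).
  unfold ball in Hd; simpl in Hd; unfold AbsRing_ball, abs, minus, plus, opp in Hd; simpl in Hd.
  assert (h x <= M) by (apply Hb; unfold x; lra).
  apply Rabs_def2 in Hd. lra.
Qed.

Definition F (e : R) (chi : R -> R) (t : R) : R :=
  if Rle_dec t (1/2) then Rpower t (-5/2)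
  else if Rle_dec t 1 then chi t else Rpower t e.

Lemma F_left e chi t : t <= 1/2 -> F e chi t = Rpower t (-5/2).
Proof. intros; unfold F; destruct Rle_dec; lra. Qed.
Lemma F_mid e chi t : 1/2 < t <= 1 -> F e chi t = chi t.
Proof. intros; unfold F; destruct Rle_dec; try lra; destruct Rle_dec; lra. Qed.
Lemma F_right e chi t : 1 < t -> F e chi t = Rpower t e.
Proof. intros; unfold F; destruct Rle_dec; try lra; destruct Rle_dec; lra. Qed.

Lemma karamata chi x h : convex_on_half_one chi -> 1/2 < x -> 0 < h -> x + h <= 1 - h ->
  chi (x + h) + chi (1 - h) <= chi x + chi 1.
Proof.
  intros Hc Hx Hh Hxh.
  set (a := (1 - x - h) / (1 - x)).
  assert (Ha : 0 <= a <= 1).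
  { unfold a; split.
    - apply Rmult_le_pos; [lra| left; apply Rinv_0_lt_compat; lra].
    - apply Rmult_le_reg_r with (1 - x); [lra|]. field_simplify; lra. }
  assert (H1 := Hc x 1 a ltac:(lra) ltac:(lra) Ha).
  assert (H2 := Hc x 1 (1 - a) ltac:(lra) ltac:(lra) ltac:(lra)).
  replace (a * x + (1 - a) * 1) with (x + h) in H1 by (unfold a; field; lra).
  replace ((1 - a) * x + (1 - (1 - a)) * 1) with (1 - h) in H2 by (unfold a; field; lra).
  lra.
Qed.

Lemma conv_deriv e chi f x : convex_on_half_one chi -> (forall t, f t = F e chi t) ->
  1/2 < x < 1 -> ex_derive f x -> ex_derive f 1 -> Derive f x <= Derive f 1.
Proof.
  intros Hc hf Hx Dx D1.
  apply Derive_correct, is_derive_Reals in Dx.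
  apply Derive_correct, is_derive_Reals in D1.
  set (d := Derive f x) in *. set (D := Derive f 1) in *.
  destruct (Rle_dec d D) as [|Hn]; auto. exfalso.
  assert (He : 0 < (d - D) / 2) by lra.
  destruct (Dx _ He) as [d1 Hd1]. destruct (D1 _ He) as [d2 Hd2].
  assert (P1 := cond_pos d1). assert (P2 := cond_pos d2).
  set (h := Rmin (Rmin d1 d2) ((1 - x) / 2) / 2).
  assert (Hm1 : Rmin (Rmin d1 d2) ((1 - x) / 2) <= Rmin d1 d2) by apply Rmin_l.
  assert (Hm2 : Rmin (Rmin d1 d2) ((1 - x) / 2) <= (1 - x)/2) by apply Rmin_r.
  assert (Hm3 : Rmin d1 d2 <= d1) by apply Rmin_l.
  assert (Hm4 : Rmin d1 d2 <= d2) by apply Rmin_r.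
  assert (Hm0 : 0 < Rmin (Rmin d1 d2) ((1 - x) / 2)).
  { apply Rmin_glb_lt; [apply Rmin_glb_lt|]; lra. }
  assert (Hh : 0 < h) by (unfold h; lra).
  assert (Q1 := Hd1 h ltac:(lra) ltac:(rewrite Rabs_right; unfold h; lra)).
  assert (Q2 := Hd2 (- h) ltac:(lra) ltac:(rewrite Rabs_left; unfold h; lra)).
  apply Rabs_def2 in Q1. apply Rabs_def2 in Q2.
  assert (K := karamata chi x h Hc ltac:(lra) Hh ltac:(unfold h; lra)).
  rewrite !hf in Q1, Q2.
  rewrite (F_mid e chi x), (F_mid e chi (x + h)) in Q1 by (unfold h; lra).
  rewrite (F_mid e chi 1), (F_mid e chi (1 + - h)) in Q2 by (unfold h; lra).
  replace (1 + - h) with (1 - h) in Q2 by ring.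
  assert (E1 : (chi (x + h) - chi x) / h <= (chi (1 - h) - chi 1) / - h).
  { replace ((chi (1 - h) - chi 1) / - h) with ((chi 1 - chi (1 - h)) / h) by (field; lra).
    apply Rmult_le_compat_r; [left; apply Rinv_0_lt_compat; lra| lra]. }
  lra.
Qed.

Lemma deriv_left e chi f t : (forall u, f u = F e chi u) -> 0 < t < 1/2 ->
  Derive f t = (-5/2) * Rpower t (-5/2 - 1).
Proof.
  intros hf Ht. rewrite <- rp_deriv by lra. apply Derive_ext_loc.
  assert (Hp : 0 < 1/2 - t) by lra.
  exists (mkposreal _ Hp). intros y Hy.
  unfold ball in Hy; simpl in Hy; unfold AbsRing_ball, abs, minus, plus, opp in Hy; simpl in Hy.
  apply Rabs_def2 in Hy. rewrite hf, F_left; lra.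
Qed.

Lemma deriv_right e chi f t : (forall u, f u = F e chi u) -> 1 < t ->
  Derive f t = e * Rpower t (e - 1).
Proof.
  intros hf Ht. rewrite <- rp_deriv by lra. apply Derive_ext_loc.
  assert (Hp : 0 < t - 1) by lra.
  exists (mkposreal _ Hp). intros y Hy.
  unfold ball in Hy; simpl in Hy; unfold AbsRing_ball, abs, minus, plus, opp in Hy; simpl in Hy.
  apply Rabs_def2 in Hy. rewrite hf, F_right; lra.
Qed.

Lemma cont_bound_right_ge (h : R -> R) a b M : a < b -> continuous h a ->
  (forall x, a < x < b -> M <= h x) -> M <= h a.
Proof.
  intros Hab Hc Hb.
  assert (Hc' : continuous (fun u => - h u) a) by exact (continuous_opp h a Hc).
  assert (- h a <= - M); [|lra].
  apply (cont_bound_right (fun u => - h u) a b); auto.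
  intros x Hx; specialize (Hb x Hx); lra.
Qed.

Definition phi (p y : R) := Rmin (Rpower y (7/5)) (Rpower y p).

Lemma phi_pos p y : 0 < phi p y.
Proof. unfold phi; apply Rmin_glb_lt; apply rp_pos. Qed.

Lemma comparable e p chi f : e < 0 -> p * e = e - 1 -> 7/5 <= p ->
  convex_on_half_one chi -> decreasing_on_half_one chi ->
  (forall t, f t = F e chi t) -> C1_pos f ->
  (forall t, 0 < t -> 0 < f t) /\
  exists c1 c2, 0 < c1 /\ 0 < c2 /\ forall t, 0 < t ->
    c1 * phi p (f t) <= - Derive f t <= c2 * phi p (f t).
Proof.
  intros He Hpe Hp Hcv Hdec hf HC.
  assert (Hex : forall t, 0 < t -> ex_derive f t) by (intros; apply HC; auto).
  assert (Hcd : forall t, 0 < t -> continuous (Derive f) t) by (intros; apply HC; auto).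
  destruct (rp_half_bound e He) as [b1 Hb1].
  assert (F1 : / 2 <= f 1).
  { apply (cont_bound_right_ge f 1 (Rpower 2 (- / e))); auto.
    - exact (ex_derive_continuous f 1 (Hex 1 ltac:(lra))).
    - intros x Hx. rewrite hf, F_right by lra. apply Hb1; lra. }
  assert (He1 : e - 1 < 0) by lra.
  destruct (rp_half_bound (e - 1) He1) as [b2 Hb2].
  assert (G1 : Derive f 1 <= e / 2).
  { apply (cont_bound_right (Derive f) 1 (Rpower 2 (- / (e - 1)))); auto.
    - apply Hcd; lra.
    - intros x Hx. rewrite (deriv_right e chi f x hf) by lra.
      assert (/ 2 <= Rpower x (e - 1)) by (apply Hb2; lra). nra. }
  assert (Gm : forall x, 1/2 < x <= 1 -> Derive f x <= e / 2).
  { intros x Hx. destruct (Req_dec x 1) as [->|Hn]; auto.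
    eapply Rle_trans; [apply (conv_deriv e chi f x Hcv hf); try apply Hex; lra| exact G1]. }
  assert (Gh : Derive f (1/2) <= e / 2).
  { apply (cont_bound_right (Derive f) (1/2) 1); [lra| |].
    - apply Hcd; lra.
    - intros x Hx; apply Gm; lra. }
  assert (GM : forall x, 1/2 <= x <= 1 -> - Derive f x >= - e / 2).
  { intros x Hx. destruct (Req_dec x (1/2)) as [->|Hn]; [lra|].
    assert (Derive f x <= e / 2) by (apply Gm; lra). lra. }
  destruct (continuity_ab_maj (fun t => - Derive f t) (1/2) 1) as [Mx [HMx HMxr]]; [lra| |].
  { intros c Hc. apply continuity_pt_filterlim.
    exact (continuous_opp (Derive f) c (Hcd c ltac:(lra))). }
  set (B := - Derive f Mx) in *. 
  assert (HB : - e / 2 <= B) by (unfold B; specialize (GM Mx HMxr); lra).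
  set (Ymax := Rmax (chi (1/2)) (Rpower (1/2) (-5/2))).
  assert (Rh1 : 1 <= Rpower (1/2) (-5/2)).
  { rewrite <- (rp_one (-5/2)) at 1. apply rp_decr_base; lra. }
  assert (YM : forall t, 1/2 <= t <= 1 -> / 2 <= f t <= Ymax).
  { intros t Ht. destruct (Req_dec t (1/2)) as [->|Hn].
    - rewrite hf, F_left by lra. split; [lra| apply Rmax_r].
    - rewrite hf, F_mid by lra. split.
      + rewrite hf, F_mid in F1 by lra. eapply Rle_trans; [exact F1|].
        apply Hdec; lra.
      + eapply Rle_trans; [| apply Rmax_l]. apply Hdec; lra. }
  set (Pmax := Rpower Ymax (7/5)).
  set (Pmin := phi p (/ 2)).
  assert (HPmin : 0 < Pmin) by apply phi_pos.
  assert (HPmax : 0 < Pmax) by apply rp_pos.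
  assert (PhM : forall t, 1/2 <= t <= 1 -> Pmin <= phi p (f t) <= Pmax).
  { intros t Ht. destruct (YM t Ht) as [Y1 Y2]. unfold phi, Pmin, Pmax, phi. split.
    - apply Rmin_glb.
      + eapply Rle_trans; [apply Rmin_l| apply Rle_Rpower_l; lra].
      + eapply Rle_trans; [apply Rmin_r| apply Rle_Rpower_l; lra].
    - eapply Rle_trans; [apply Rmin_l| apply Rle_Rpower_l; lra]. }
  assert (Fpos : forall t, 0 < t -> 0 < f t).
  { intros t Ht. destruct (Rlt_le_dec t (1/2)) as [H1|H1].
    - rewrite hf, F_left by lra; apply rp_pos.
    - destruct (Rle_lt_dec t 1) as [H2|H2].
      + destruct (YM t ltac:(lra)); lra.
      + rewrite hf, F_right by lra; apply rp_pos. }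
  split; [exact Fpos|].
  set (c1 := Rmin (Rmin (5/2) (- e)) ((- e / 2) / Pmax)).
  set (c2 := Rmax (Rmax (5/2) (- e)) (B / Pmin)).
  assert (Hc1a : c1 <= 5/2) by (unfold c1; eapply Rle_trans; [apply Rmin_l| apply Rmin_l]).
  assert (Hc1b : c1 <= - e) by (unfold c1; eapply Rle_trans; [apply Rmin_l| apply Rmin_r]).
  assert (Hc1c : c1 <= (- e / 2) / Pmax) by (unfold c1; apply Rmin_r).
  assert (Hc2a : 5/2 <= c2) by (unfold c2; eapply Rle_trans; [| apply Rmax_l]; apply Rmax_l).
  assert (Hc2b : - e <= c2) by (unfold c2; eapply Rle_trans; [| apply Rmax_l]; apply Rmax_r).
  assert (Hc2c : B / Pmin <= c2) by (unfold c2; apply Rmax_r).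
  assert (Hq : 0 < (- e / 2) / Pmax) by (apply Rdiv_lt_0_compat; lra).
  exists c1, c2. split; [unfold c1; apply Rmin_glb_lt; [apply Rmin_glb_lt|]; lra|].
  split; [lra|].
  intros t Ht. assert (Hph := phi_pos p (f t)).
  destruct (Rlt_le_dec t (1/2)) as [H1|H1].
  -
    assert (Ey : f t = Rpower t (-5/2)) by (rewrite hf, F_left; lra).
    assert (Y1 : 1 <= f t).
    { rewrite Ey, <- (rp_one (-5/2)). apply rp_decr_base; lra. }
    assert (Ephi : phi p (f t) = Rpower t (-5/2 - 1)).
    { unfold phi. rewrite Rmin_left by (apply Rle_Rpower; lra).
      rewrite Ey, Rpower_mult. f_equal. field. }
    rewrite (deriv_left e chi f t hf) by lra. rewrite Ephi in *.
    split; nra.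
  - destruct (Rle_lt_dec t 1) as [H2|H2].
    + destruct (PhM t ltac:(lra)) as [P1 P2]. assert (G := GM t ltac:(lra)).
      assert (GB : - Derive f t <= B) by (apply HMx; lra).
      split.
      * apply Rle_trans with ((- e / 2) / Pmax * phi p (f t)); [nra|].
        apply Rle_trans with ((- e / 2) / Pmax * Pmax); [nra|].
        field_simplify; lra.
      * apply Rle_trans with B; auto.
        apply Rle_trans with (B / Pmin * Pmin); [field_simplify; lra|].
        assert (0 <= B / Pmin) by (apply Rdiv_le_0_compat; lra). nra.
    + assert (Ey : f t = Rpower t e) by (rewrite hf, F_right; lra).
      assert (Y1 : f t <= 1).
      { rewrite Ey, <- (rp_one e). apply rp_decr_base; lra. }
      assert (Ephi : phi p (f t) = Rpower t (e - 1)).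
      { unfold phi. rewrite Rmin_right by (apply rp_exp_le1; auto; apply Fpos; lra).
        rewrite Ey, Rpower_mult. f_equal. lra. }
      rewrite (deriv_right e chi f t hf) by lra. rewrite Ephi in *.
      split; nra.
Qed.

Lemma phi_scale p k y : 0 < k -> 0 < y ->
  phi p (k * y) <= Rmax (Rpower k (7/5)) (Rpower k p) * phi p y.
Proof.
  intros Hk Hy. unfold phi.
  rewrite <- !Rpower_mult_distr by lra.
  assert (A1 := rp_pos k (7/5)). assert (A2 := rp_pos k p).
  assert (A3 := rp_pos y (7/5)). assert (A4 := rp_pos y p).
  assert (M1 := Rmax_l (Rpower k (7/5)) (Rpower k p)).
  assert (M2 := Rmax_r (Rpower k (7/5)) (Rpower k p)).
  unfold Rmin at 2. destruct Rle_dec.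
  - eapply Rle_trans; [apply Rmin_l|]. nra.
  - eapply Rle_trans; [apply Rmin_r|]. nra.
Qed.

Lemma surj e chi f : e < 0 -> (forall t, f t = F e chi t) -> C1_pos f ->
  forall r, 0 < r -> exists t, 0 < t /\ f t = r.
Proof.
  intros He hf HC r Hr.
  set (t1 := Rmin (1/4) (Rpower (r + 1) (-2/5))).
  set (t2 := Rmax 2 (Rpower (r / 2) (/ e))).
  assert (T1 : 0 < t1) by (unfold t1; apply Rmin_glb_lt; [lra| apply rp_pos]).
  assert (T1a : t1 <= 1/4) by apply Rmin_l.
  assert (T1b : t1 <= Rpower (r + 1) (-2/5)) by apply Rmin_r.
  assert (T2a : 2 <= t2) by apply Rmax_l.
  assert (T2b : Rpower (r / 2) (/ e) <= t2) by apply Rmax_r.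
  assert (V1 : r + 1 <= f t1).
  { rewrite hf, F_left by lra.
    eapply Rle_trans; [| apply rp_decr_base; [exact T1| exact T1b| lra]].
    rewrite Rpower_mult. replace (-2/5 * (-5/2)) with 1 by field.
    rewrite Rpower_1; lra. }
  assert (V2 : f t2 <= r / 2).
  { rewrite hf, F_right by lra.
    eapply Rle_trans; [apply rp_decr_base; [apply rp_pos| exact T2b| lra]|].
    rewrite Rpower_mult. replace (/ e * e) with 1 by (field; lra).
    rewrite Rpower_1; lra. }
  destruct (Ranalysis5.IVT_interv (fun u => r - f u) t1 t2) as [z [Hz Hfz]].
  - intros a Ha. apply continuity_pt_filterlim.
    apply (continuous_minus (fun _ => r) f).
    + apply continuous_const.
    + apply ex_derive_continuous. apply HC. lra.
  - lra.
  - lra.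
  - lra.
  - exists z; split; lra.
Qed.

Lemma core e p chi f : e < 0 -> p * e = e - 1 -> 7/5 <= p ->
  convex_on_half_one chi -> decreasing_on_half_one chi ->
  (forall t, f t = F e chi t) -> C1_pos f ->
  (forall t, 0 < t -> 0 <= - Derive f t) /\
  forall k, 0 < k -> exists C, forall t t', 0 < t -> 0 < t' -> f t' = k * f t ->
    - Derive f t' <= C * (- Derive f t).
Proof.
  intros He Hpe Hp Hcv Hdec hf HC.
  destruct (comparable e p chi f He Hpe Hp Hcv Hdec hf HC) as [Fpos [c1 [c2 [Hc1 [Hc2 Hb]]]]].
  split.
  - intros t Ht. destruct (Hb t Ht). assert (H3 := phi_pos p (f t)). nra.
  - intros k Hk. set (K := Rmax (Rpower k (7/5)) (Rpower k p)).
    assert (HK : 0 < K) by (unfold K; eapply Rlt_le_trans; [apply rp_pos| apply Rmax_l]).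
    exists (c2 * K / c1). intros t t' Ht Ht' Heq.
    destruct (Hb t Ht) as [L1 U1]. destruct (Hb t' Ht') as [L2 U2].
    rewrite Heq in U2.
    assert (S := phi_scale p k (f t) Hk (Fpos t Ht)). fold K in S.
    assert (H3 := phi_pos p (f t)).
    apply Rle_trans with (c2 * (K * phi p (f t))).
    + eapply Rle_trans; [exact U2|]. nra.
    + apply Rle_trans with (c2 * K / c1 * (c1 * phi p (f t))).
      * right; field; lra.
      * assert (0 <= c2 * K / c1) by (apply Rdiv_le_0_compat; nra).
        nra.
Qed.

Lemma pos_inv_spec f r : (exists t, 0 < t /\ f t = r) ->
  0 < pos_inv f r /\ f (pos_inv f r) = r.
Proof. intros H. unfold pos_inv. exact (epsilon_spec (inhabits 0) _ H). Qed.

Lemma scaled_bound (g : R -> R -> R) f :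
  (forall lam t, g lam t = lam * f t) ->
  (forall r, 0 < r -> exists t, 0 < t /\ f t = r) ->
  (forall t, 0 < t -> 0 <= - Derive f t) ->
  forall C k, 0 < k -> (forall t t', 0 < t -> 0 < t' -> f t' = k * f t ->
    - Derive f t' <= C * (- Derive f t)) ->
  forall C', C <= C' -> forall r lam, 0 < r -> 1 <= lam ->
  - Derive (g lam) (pos_inv (g lam) (k * r)) <= C' * - Derive (g lam) (pos_inv (g lam) r).
Proof.
  intros hg Hs Hnn C k Hk HC C' HCC' r lam Hr Hl.
  assert (DG : forall t, Derive (g lam) t = lam * Derive f t).
  { intros t. rewrite (Derive_ext (g lam) (fun u => lam * f u)) by apply hg.
    apply Derive_scal. }
  assert (Inv : forall s, 0 < s -> 0 < pos_inv (g lam) s /\ lam * f (pos_inv (g lam) s) = s).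
  { intros s Hs0. rewrite <- hg. apply pos_inv_spec.
    destruct (Hs (s / lam)) as [t [Ht Hft]]; [apply Rdiv_lt_0_compat; lra|].
    exists t; split; auto. rewrite hg, Hft. field; lra. }
  destruct (Inv r Hr) as [P1 E1].
  destruct (Inv (k * r) ltac:(nra)) as [P2 E2].
  rewrite !DG.
  set (t := pos_inv (g lam) r) in *. set (t' := pos_inv (g lam) (k * r)) in *.
  assert (Hf : f t' = k * f t).
  { apply Rmult_eq_reg_l with lam; [|lra]. rewrite E2. nra. }
  assert (Q := HC t t' P1 P2 Hf). assert (N := Hnn t P1).
  assert (Q2 : - Derive f t' <= C' * - Derive f t).
  { eapply Rle_trans; [exact Q|]. apply Rmult_le_compat_r; lra. }
  assert (Q3 : lam * - Derive f t' <= lam * (C' * - Derive f t))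
    by (apply Rmult_le_compat_l; lra).
  lra.
Qed.

Theorem lemmaB1 (chi chit : R -> R)
  (Hchi : admissible_m chi) (Hchit : admissible_mu chit) :
  forall kappa : R, 0 < kappa ->
  exists C : R, forall r lam : R, 0 < r -> 1 <= lam ->
    xi chi lam (kappa * r) <= C * xi chi lam r /\
    vartheta chit lam (kappa * r) <= C * vartheta chit lam r.
Proof.
  intros k Hk.
  destruct Hchi as [Cv1 [Dc1 H1]]. destruct Hchit as [Cv2 [Dc2 H2]].
  assert (hf1 : forall t, m_fun chi 1 t = F (-3/2) chi t).
  { intros t; unfold m_fun, F; destruct Rle_dec; [|destruct Rle_dec]; ring. }
  assert (hf2 : forall t, mu_fun chit 1 t = F (-1/2) chit t).
  { intros t; unfold mu_fun, F; destruct Rle_dec; [|destruct Rle_dec]; ring. }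
  assert (C1a : C1_pos (m_fun chi 1)) by (apply (H1 1); lra).
  assert (C1b : C1_pos (mu_fun chit 1)) by (apply (H2 1); lra).
  destruct (core (-3/2) (5/3) chi (m_fun chi 1) ltac:(lra) ltac:(field) ltac:(lra) Cv1 Dc1 hf1 C1a)
    as [N1 K1].
  destruct (core (-1/2) 3 chit (mu_fun chit 1) ltac:(lra) ltac:(field) ltac:(lra) Cv2 Dc2 hf2 C1b)
    as [N2 K2].
  destruct (K1 k Hk) as [Ca HCa]. destruct (K2 k Hk) as [Cb HCb].
  exists (Rmax Ca Cb). intros r lam Hr Hl. unfold xi, vartheta.
  split.
  - apply (scaled_bound (m_fun chi) (m_fun chi 1)) with (C := Ca); auto.
    + intros l t; unfold m_fun; destruct Rle_dec; [|destruct Rle_dec]; ring.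
    + apply (surj (-3/2) chi); auto; lra.
    + apply Rmax_l.
  - apply (scaled_bound (mu_fun chit) (mu_fun chit 1)) with (C := Cb); auto.
    + intros l t; unfold mu_fun; destruct Rle_dec; [|destruct Rle_dec]; ring.
    + apply (surj (-1/2) chit); auto; lra.
    + apply Rmax_r.
Qed.
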